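(* Let $n\geq 2$ be finite, let $\mathfrak{A}\in TA_n$ be countable, let $a\in A$ be nonzero and let $X\subseteq A$ satisfy $\prod X=0$ in $\mathfrak A$. Then there exist a permutable set $V$ (one may take $V=S_n$, the set of permutations of $n$) and a homomorphism $h:\mathfrak{A}\to\wp(V)$ such that $h(a)\neq\emptyset$ and $\bigcap_{x\in X}h(x)=\emptyset$.
   Context: $TA_n=\mathbf{Mod}(\Sigma_n)$, where $\Sigma_n$ consists of the Boolean algebra axioms, the equations saying each $s_{ij}$ ($i\neq j<n$) is a Boolean endomorphism, and $t_1(x)=t_2(x)$ for all words $t_1,t_2$ in the $s_{ij}$ whose associated compositions of transpositions $[i,j]$ coincide in $S_n$. A set $V\subseteq{}^nU$ is permutable if $s\circ[i,j]\in V$ whenever $s\in V$, $i\neq j<n$. $\wp(V)=\langle\mathcal P(V);\cap,-,S_{ij}\rangle$ with complement relative to $V$ and $S_{ij}(Y)=\{q\in V:q\circ[i,j]\in Y\}$. *)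

(* Defs.v *)
From HB Require Import structures.
From mathcomp Require Import all_boot all_order all_fingroup.
Set Implicit Arguments. Unset Strict Implicit. Unset Printing Implicit Defensive.
Import Order.TTheory.
Local Open Scope order_scope.

(* A word in the s_ij is a list of index pairs [(i1,j1);...;(ik,jk)],
   denoting the term s_{i1 j1}(s_{i2 j2}(... s_{ik jk}(x))). *)
Definition word (n : nat) := seq ('I_n * 'I_n).

Definition proper_word n (w : word n) : bool := all (fun p => p.1 != p.2) w.

Definition weval (n : nat) (T : Type) (s : 'I_n -> 'I_n -> T -> T)
  (w : word n) (x : T) : T := foldr (fun p y => s p.1 p.2 y) x w.

Definition wperm (n : nat) (w : word n) : 'S_n :=
  foldr (fun p acc => (tperm p.1 p.2 * acc)%g) 1%g w.

(* The Boolean algebra axioms are provided by A : ctbDistrLatticeType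
   (complemented distributive lattice with top and bottom = Boolean algebra). *)
Definition isTA (d : Order.disp_t) (A : ctbDistrLatticeType d) (n : nat)
  (s : 'I_n -> 'I_n -> A -> A) : Prop :=
  (forall i j : 'I_n, i != j ->
     (forall x y, s i j (x `&` y) = s i j x `&` s i j y) /\
     (forall x y, s i j (x `|` y) = s i j x `|` s i j y) /\
     (forall x, s i j (~` x) = ~` s i j x) /\
     s i j \bot = \bot /\ s i j \top = \top) /\
  (forall w1 w2 : word n, proper_word w1 -> proper_word w2 ->
     wperm w1 = wperm w2 -> forall x, weval s w1 x = weval s w2 x).

Definition countable_type (T : Type) : Prop :=
  exists f : T -> nat, injective f.

Definition inf_is_bot (d : Order.disp_t) (A : ctbDistrLatticeType d)
  (X : A -> Prop) : Prop :=
  forall b : A, (forall x, X x -> b <= x) -> b = \bot.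

Definition compT (n : nat) (U : Type) (q : 'I_n -> U) (i j : 'I_n) : 'I_n -> U :=
  fun k => q (tperm i j k).

Definition permutable (n : nat) (U : Type) (V : ('I_n -> U) -> Prop) : Prop :=
  forall q, V q -> forall i j : 'I_n, i != j -> V (compT q i j).

Definition wp_hom (d : Order.disp_t) (A : ctbDistrLatticeType d) (n : nat)
  (s : 'I_n -> 'I_n -> A -> A) (U : Type) (V : ('I_n -> U) -> Prop)
  (h : A -> ('I_n -> U) -> Prop) : Prop :=
  (forall x q, h x q -> V q) /\
  (forall x y q, h (x `&` y) q <-> (h x q /\ h y q)) /\
  (forall x q, h (~` x) q <-> (V q /\ ~ h x q)) /\
  (forall i j : 'I_n, i != j -> forall x q,
     h (s i j x) q <-> (V q /\ h x (compT q i j))).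

Arguments compT {n U} q i j.
Definition Sn_set {n : nat} : ('I_n -> 'I_n) -> Prop := fun q => bijective q.

(* Main.v *)
Require Import Defs.
From HB Require Import structures.
From mathcomp Require Import all_boot all_order all_fingroup.
From Stdlib Require Import Classical ClassicalEpsilon.
Import Order.TTheory Order.CTBDistrLatticeTheory.
Local Open Scope order_scope.
Set Implicit Arguments. Unset Strict Implicit.
Definition wordof n (p : 'S_n) : word n := sval (prod_tpermP p).

Lemma wperm_prod n (w : word n) : wperm w = (\prod_(t <- w) tperm t.1 t.2)%g.
Proof. by elim: w => [|t w IH]; rewrite ?big_nil ?big_cons //= IH. Qed.

Lemma wordofK n (p : 'S_n) : wperm (wordof p) = p.
Proof. rewrite wperm_prod /wordof; by case: (prod_tpermP p). Qed.

Lemma wordof_proper n (p : 'S_n) : proper_word (wordof p).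
Proof. rewrite /wordof; by case: (prod_tpermP p). Qed.

Lemma wperm_cat n (w1 w2 : word n) : wperm (w1 ++ w2) = (wperm w1 * wperm w2)%g.
Proof. elim: w1 => [|t w IH] /=; first by rewrite mul1g. by rewrite IH mulgA. Qed.

Lemma weval_cat n (T : Type) (s : 'I_n -> 'I_n -> T -> T) w1 w2 x :
  weval s (w1 ++ w2) x = weval s w1 (weval s w2 x).
Proof. by rewrite /weval foldr_cat. Qed.

Definition Sp n (T : Type) (s : 'I_n -> 'I_n -> T -> T) (p : 'S_n) (x : T) : T :=
  weval s (wordof p) x.

Lemma Sp_w (d : Order.disp_t) (A : ctbDistrLatticeType d) n (s : 'I_n -> 'I_n -> A -> A)
  (HTA : isTA s) (w : word n) x : proper_word w -> Sp s (wperm w) x = weval s w x.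
Proof.
move=> pw; apply: HTA.2 => //; first exact: wordof_proper. by rewrite wordofK.
Qed.

Lemma Sp_mul (d : Order.disp_t) (A : ctbDistrLatticeType d) n (s : 'I_n -> 'I_n -> A -> A)
  (HTA : isTA s) u v x : Sp s (u * v)%g x = Sp s u (Sp s v x).
Proof.
rewrite -{1}(wordofK u) -{1}(wordofK v) -wperm_cat Sp_w //.
  by rewrite weval_cat.
by rewrite /proper_word all_cat; apply/andP; split; apply: wordof_proper.
Qed.

Lemma Sp1 (d : Order.disp_t) (A : ctbDistrLatticeType d) n (s : 'I_n -> 'I_n -> A -> A)
  (HTA : isTA s) x : Sp s 1%g x = x.
Proof. by rewrite -[1%g]/(wperm [::]) Sp_w. Qed.

Lemma Sp_t (d : Order.disp_t) (A : ctbDistrLatticeType d) n (s : 'I_n -> 'I_n -> A -> A)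
  (HTA : isTA s) (i j : 'I_n) x : i != j -> Sp s (tperm i j) x = s i j x.
Proof.
move=> ij; have -> : tperm i j = wperm [:: (i, j)] by rewrite /= mulg1.
by rewrite Sp_w //= ij.
Qed.

Lemma weval_hom (d : Order.disp_t) (A : ctbDistrLatticeType d) n (s : 'I_n -> 'I_n -> A -> A)
  (HTA : isTA s) (w : word n) : proper_word w ->
  (forall x y, weval s w (x `&` y) = weval s w x `&` weval s w y) /\
  (forall x, weval s w (~` x) = ~` weval s w x) /\ weval s w \bot = \bot.
Proof.
elim: w => [|t w IH] //= /andP [tp pw].
have [H1 [H2 [H3 [H4 H5]]]] := HTA.1 _ _ tp.
have [J1 [J2 J3]] := IH pw.
by split; [move=> x y; rewrite /weval /= -/(weval s w _) J1 H1
  | split; [move=> x; rewrite /weval /= -/(weval s w _) J2 H3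
  | rewrite /weval /= -/(weval s w _) J3 H4]].
Qed.

Definition gsel (A : Type) (f : A -> nat) (k : nat) : option A :=
  match excluded_middle_informative (exists x, f x = k) with
  | left H => Some (proj1_sig (constructive_indefinite_description _ H))
  | right _ => None end.

Lemma gselE (A : Type) (f : A -> nat) (Hf : injective f) y : gsel f (f y) = Some y.
Proof.
rewrite /gsel; case: excluded_middle_informative => [H|H]; last by case: H; exists y.
case: constructive_indefinite_description => z /= /Hf -> //.
Qed.

Definition step (d : Order.disp_t) (A : ctbDistrLatticeType d) (c : A) (o : option A) :=
  match o with Some x => if c `&` x == \bot then c `&` ~` x else c `&` x | None => c end.

Fixpoint cseq (d : Order.disp_t) (A : ctbDistrLatticeType d) (f : A -> nat) (b : A) k :=
  match k with 0 => b | k.+1 => step (cseq f b k) (gsel f k) end.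

Lemma step_ne0 (d : Order.disp_t) (A : ctbDistrLatticeType d) (c : A) o :
  c != \bot -> step c o != \bot.
Proof.
case: o => [x|] //= cn; case: ifP => H; last by rewrite H.
by move: H; rewrite disj_leC => H; rewrite (meet_l H).
Qed.

Lemma step_le (d : Order.disp_t) (A : ctbDistrLatticeType d) (c : A) o : step c o <= c.
Proof. by case: o => [x|] //=; case: ifP => _; rewrite leIl. Qed.

Lemma ultra (d : Order.disp_t) (A : ctbDistrLatticeType d) (Hc : countable_type A)
  (b : A) : b != \bot -> exists F : A -> Prop, F b /\
  (forall x y, F (x `&` y) <-> F x /\ F y) /\ (forall x, F (~` x) <-> ~ F x).
Proof.
move=> bn; case: Hc => f Hf.
pose c := cseq f b.
have cn k : c k != \bot by elim: k => //= k IH; apply: step_ne0.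
have cle m k : (m <= k)%N -> c k <= c m.
  move=> /subnK <-; elim: (k - m)%N => //= i IH.
  by rewrite addSn /=; apply: le_trans (step_le _ _) IH.
have dich y : c (f y).+1 <= y \/ c (f y).+1 <= ~` y.
  rewrite /c /= gselE //=; case: ifP => _; [right|left]; exact: leIr.
exists (fun y => exists k, c k <= y); split; first by exists 0%N.
have meetF x y : (exists k, c k <= x) /\ (exists k, c k <= y) ->
   exists k, c k <= x `&` y.
  case=> -[k Hk] [m Hm]; exists (maxn k m); rewrite lexI.
  by rewrite (le_trans (cle k _ (leq_maxl _ _)) Hk) (le_trans (cle m _ (leq_maxr _ _)) Hm).
split.
  move=> x y; split; last exact: meetF.
  by case=> k Hk; split; exists k; apply: le_trans Hk _; rewrite ?leIl ?leIr.
move=> x; split.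
  move=> H1 H2; have [k Hk] := meetF _ _ (conj H1 H2).
  by move: Hk; rewrite meetCx lex0 => /eqP E; move: (cn k); rewrite E eqxx.
move=> H; case: (dich x) => H'; last by exists (f x).+1.
by case: H; exists (f x).+1.
Qed.

Definition Pq n (q : 'I_n -> 'I_n) : 'S_n := insubd (1%g : 'S_n) [ffun k => q k].

Lemma PqE n (q : 'I_n -> 'I_n) : injective q -> forall k, Pq q k = q k.
Proof.
move=> iq k.
have Hi : injectiveb [ffun k => q k] by apply/injectiveP => x y; rewrite !ffunE => /iq.
rewrite -pvalE /Pq; have := insubdK (1%g : 'S_n) Hi; rewrite /val /= => ->; by rewrite ffunE.
Qed.

Lemma Sp_le (d : Order.disp_t) (A : ctbDistrLatticeType d) n (s : 'I_n -> 'I_n -> A -> A)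
  (HTA : isTA s) p (x y : A) : x <= y -> Sp s p x <= Sp s p y.
Proof.
move=> /meet_idPl H; apply/meet_idPl.
have [H1 _] := weval_hom HTA (wordof_proper p).
by rewrite /Sp -H1 H.
Qed.

Lemma omit (d : Order.disp_t) (A : ctbDistrLatticeType d) n (s : 'I_n -> 'I_n -> A -> A)
  (HTA : isTA s) (X : A -> Prop) (HX : inf_is_bot X) (l : seq 'S_n) (b : A) :
  b != \bot -> exists b', b' != \bot /\ b' <= b /\
    forall p, p \in l -> exists x, X x /\ b' <= ~` Sp s p x.
Proof.
elim: l b => [|p l IH] b bn; first by exists b.
have [b' [b'n [b'b Hb']]] := IH b bn.
have [x [Xx nle]] : exists x, X x /\ ~ (b' <= Sp s p x).
  apply: NNPP => H; move/eqP: b'n; apply.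
  have H' : forall x, X x -> b' <= Sp s p x.
    by move=> x Xx; apply: NNPP => Hn; apply: H; exists x.
  have E : Sp s (p^-1)%g b' = \bot.
    apply: HX => x Xx; apply: le_trans (Sp_le HTA _ (H' x Xx)) _.
    by rewrite -Sp_mul // mulVg Sp1.
  have [_ [_ H3]] := weval_hom HTA (wordof_proper p).
  by rewrite -(Sp1 HTA b') -(mulgV p) Sp_mul // E /Sp H3.
exists (b' `&` ~` Sp s p x); split.
  apply/negP => H; apply: nle; move: H; by rewrite disj_leC complK.
split; first by apply: le_trans (leIl _ _) b'b.
move=> p'; rewrite inE => /orP [/eqP ->|/Hb' [y [Xy Hy]]].
  by exists x; split => //; rewrite leIr.
by exists y; split => //; apply: le_trans (leIl _ _) Hy.
Qed.

Lemma comp_bij n (q : 'I_n -> 'I_n) (i j : 'I_n) : bijective q -> bijective (compT q i j).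
Proof.
move=> /bij_inj iq; apply: injF_bij => x y; rewrite /compT => /iq; exact: perm_inj.
Qed.

Theorem theorem3p18 (n : nat) (hn : (1 < n)%N) (d : Order.disp_t)
  (A : ctbDistrLatticeType d) (s : 'I_n -> 'I_n -> A -> A)
  (HTA : isTA s) (Hcount : countable_type A)
  (a : A) (Ha : a != \bot) (X : A -> Prop) (HX : inf_is_bot X) :
  permutable (@Sn_set n) /\
  exists h : A -> ('I_n -> 'I_n) -> Prop,
    wp_hom s (@Sn_set n) h /\
    (exists q, h a q) /\
    (forall q, @Sn_set n q -> ~ (forall x, X x -> h x q)).
Proof.
split; first by move=> q Vq i j _; apply: comp_bij.
have [b [bn [ba Hb]]] := omit HTA HX (enum 'S_n) Ha.
have [F [Fb [Fm Fc]]] := ultra Hcount bn.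
have Fup x y : x <= y -> F x -> F y.
  by move=> /meet_idPl E Fx; rewrite -E in Fx; case: (proj1 (Fm _ _) Fx).
exists (fun x q => bijective q /\ F (Sp s (Pq q)^-1 x)).
split; [split; [by move=> x q [] | split; [|split]] | split].
- move=> x y q; have [H1 _] := weval_hom HTA (wordof_proper (Pq q)^-1).
  rewrite /Sp H1 -/(Sp _ _ _) -/(Sp _ _ _) Fm; tauto.
- move=> x q; have [_ [H2 _]] := weval_hom HTA (wordof_proper (Pq q)^-1).
  rewrite /Sp H2 -/(Sp _ _ _) Fc; tauto.
- move=> i j ij x q; rewrite -Sp_t // -Sp_mul //.
  have E : bijective q -> Pq (compT q i j) = (tperm i j * Pq q)%g.
    move=> bq; apply/permP => k; rewrite permM !PqE //; first exact: bij_inj.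
    exact: bij_inj (comp_bij i j bq).
  split => [[bq Fq]|[bq [_ Fq]]].
    by split => //; split; [exact: comp_bij | rewrite E // invMg tpermV].
  by split => //; rewrite E // invMg tpermV in Fq.
- exists id; split; first by exists id.
  have -> : Pq (@id 'I_n) = 1%g by apply/permP => k; rewrite PqE // perm1.
  by rewrite invg1 Sp1 //; apply: Fup Fb.
- move=> q bq H.
  have [x [Xx Hx]] := Hb (Pq q)^-1%g (mem_enum _ _).
  have [_ Fx] := H x Xx.
  by have := Fup _ _ Hx Fb; rewrite Fc.
Qed.
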